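(* Let $(X,d)$ be a path-connected metric space, $x_0\in X$, $n\geq 1$. The $\pi_1$-action $\pi_1(X,x_0)\times\pi_n(X,x_0)\to\pi_n(X,x_0)$, $([\gamma],[\alpha])\mapsto[\gamma\ast\alpha]$, is jointly continuous when $\pi_1(X,x_0)$ and $\pi_n(X,x_0)$ carry the topologies induced by their pseudometrics $\rho$. Moreover, $\pi_1(X,x_0)$ acts on $(\pi_n(X,x_0),\rho)$ by isometries.
   Context: For $k\geq1$, identify $k$-loops with based maps $(S^k,d_0)\to(X,x_0)$, $d_0=(1,0,\dots,0)$, with uniform metric $\mu(\alpha,\beta)=\sup_{t}d(\alpha(t),\beta(t))$; on $\pi_k(X,x_0)$ set $\rho(a,b)=\inf\{\mu(\alpha,\beta)\mid\alpha\in a,\beta\in b\}$ (a pseudometric), topologized by its open balls. Path-conjugation: fix a retraction $r:S^n\times[0,1]\to S^n\times\{0\}\cup\{d_0\}\times[0,1]$. For a path $\gamma$ and a based map $\alpha:(S^n,d_0)\to(X,\gamma(1))$, let $h$ be $\alpha$ on $S^n\times\{0\}$ and $h(d_0,s)=\gamma(1-s)$; then $\gamma\ast\alpha:(S^n,d_0)\to(X,\gamma(0))$ is $t\mapsto h(r(t,1))$. For loops $\gamma$ at $x_0$ this induces the usual action of $\pi_1(X,x_0)$ on $\pi_n(X,x_0)$. *)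

(* Defs.v *)
From Stdlib Require Import Reals.
From Coquelicot Require Import Coquelicot.
Open Scope R_scope.

Record MetSpace := {
  mcarrier :> Type;
  mdist : mcarrier -> mcarrier -> R;
  mdist_ge0 : forall x y, 0 <= mdist x y;
  mdist_eq0 : forall x y, mdist x y = 0 <-> x = y;
  mdist_sym : forall x y, mdist x y = mdist y x;
  mdist_tri : forall x y z, mdist x z <= mdist x y + mdist y z }.

Arguments mdist {m} _ _.

Definition unitI (s : R) : Prop := 0 <= s <= 1.

(** Points of R^(k+1) are functions nat -> R vanishing beyond index k. *)
Definition euclid_pt (k : nat) (v : nat -> R) : Prop :=
  forall i, (k < i)%nat -> v i = 0.

Definition edist (k : nat) (u v : nat -> R) : R :=
  sqrt (sum_f_R0 (fun i => (u i - v i) ^ 2) k).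

Definition sphere (k : nat) (v : nat -> R) : Prop :=
  euclid_pt k v /\ sum_f_R0 (fun i => v i ^ 2) k = 1.

Definition d0 : nat -> R := fun i => if Nat.eqb i 0 then 1 else 0.

Definition cont_sphere {X : MetSpace} (k : nat) (f : (nat -> R) -> X) : Prop :=
  forall v, sphere k v -> forall eps, 0 < eps -> exists delta, 0 < delta /\
    forall w, sphere k w -> edist k v w < delta -> mdist (f v) (f w) < eps.

Definition cont_path {X : MetSpace} (p : R -> X) : Prop :=
  forall s, unitI s -> forall eps, 0 < eps -> exists delta, 0 < delta /\
    forall s', unitI s' -> Rabs (s - s') < delta -> mdist (p s) (p s') < eps.

Definition cont_cyl {X : MetSpace} (k : nat) (H : (nat -> R) -> R -> X) : Prop :=
  forall v s, sphere k v -> unitI s -> forall eps, 0 < eps -> exists delta, 0 < delta /\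
    forall w t, sphere k w -> unitI t -> edist k v w < delta -> Rabs (s - t) < delta ->
      mdist (H v s) (H w t) < eps.

Definition path_connected (X : MetSpace) : Prop :=
  forall x y : X, exists p : R -> X, cont_path p /\ p 0 = x /\ p 1 = y.

Definition is_loop {X : MetSpace} (k : nat) (x0 : X) (a : (nat -> R) -> X) : Prop :=
  cont_sphere k a /\ a d0 = x0.

Definition based_htpy {X : MetSpace} (k : nat) (x0 : X) (a b : (nat -> R) -> X) : Prop :=
  exists H : (nat -> R) -> R -> X, cont_cyl k H /\
    (forall v, sphere k v -> H v 0 = a v /\ H v 1 = b v) /\
    (forall s, unitI s -> H d0 s = x0).

Definition mu {X : MetSpace} (k : nat) (a b : (nat -> R) -> X) : R :=
  real (Lub_Rbar (fun r => exists v, sphere k v /\ r = mdist (a v) (b v))).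

(** The pseudometric rho([a],[b]) = inf { mu(a',b') | a' in [a], b' in [b] } on
    pi_k(X,x0), expressed through representatives a, b. *)
Definition rho {X : MetSpace} (k : nat) (x0 : X) (a b : (nat -> R) -> X) : R :=
  real (Glb_Rbar (fun r => exists a' b', is_loop k x0 a' /\ is_loop k x0 b' /\
     based_htpy k x0 a a' /\ based_htpy k x0 b b' /\ r = mu k a' b')).

Definition in_A (n : nat) (p : (nat -> R) * R) : Prop :=
  sphere n (fst p) /\ unitI (snd p) /\ (snd p = 0 \/ fst p = d0).

Definition cyl_dist (n : nat) (p q : (nat -> R) * R) : R :=
  Rmax (edist n (fst p) (fst q)) (Rabs (snd p - snd q)).

Definition is_retraction (n : nat) (r : (nat -> R) -> R -> (nat -> R) * R) : Prop :=
  (forall v s, sphere n v -> unitI s -> in_A n (r v s)) /\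
  (forall p, in_A n p -> r (fst p) (snd p) = p) /\
  (forall v s, sphere n v -> unitI s -> forall eps, 0 < eps -> exists delta, 0 < delta /\
    forall w t, sphere n w -> unitI t -> edist n v w < delta -> Rabs (s - t) < delta ->
      cyl_dist n (r v s) (r w t) < eps).

(** Path-conjugation gamma * alpha : t |-> h(r(t,1)), where h = alpha on
    S^n x {0} and h(d0,s) = gamma(1-s). *)
Definition path_conj {X : MetSpace} (n : nat) (r : (nat -> R) -> R -> (nat -> R) * R)
  (gamma : R -> X) (alpha : (nat -> R) -> X) : (nat -> R) -> X :=
  fun t => let p := r t 1 in
    if Req_EM_T (snd p) 0 then alpha (fst p) else gamma (1 - snd p).

(** The exponential map [0,1] -> S^1, s |-> (cos 2 pi s, sin 2 pi s), identifying
    a 1-loop g : S^1 -> X with the path s |-> g(e(s)). *)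
Definition circ_exp (s : R) : nat -> R :=
  fun i => if Nat.eqb i 0 then cos (2 * PI * s)
           else if Nat.eqb i 1 then sin (2 * PI * s) else 0.

Definition pi1_act {X : MetSpace} (n : nat) (r : (nat -> R) -> R -> (nat -> R) * R)
  (g : (nat -> R) -> X) (alpha : (nat -> R) -> X) : (nat -> R) -> X :=
  path_conj n r (fun s => g (circ_exp s)) alpha.

(* Main.v *)
Require Import Defs.
From Stdlib Require Import Reals Lra Lia FunctionalExtensionality ClassicalEpsilon Classical List.
From Coquelicot Require Import Coquelicot.
Open Scope R_scope.

Lemma cont_eps (f : R -> R) : continuity f -> forall x eps, 0 < eps ->
  exists delta, 0 < delta /\ forall y, Rabs (y - x) < delta -> Rabs (f y - f x) < eps.
Proof.
  intros Hc x eps He. destruct (Hc x eps He) as [a [Ha H]].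
  exists a; split; [exact Ha|]. intros y Hy.
  destruct (Req_dec x y) as [<-|Hne].
  - unfold Rminus; rewrite Rplus_opp_r, Rabs_R0; exact He.
  - apply (H y). split; [split; [exact I|exact Hne]|]. exact Hy.
Qed.

Lemma d0_sphere n : sphere n d0.
Proof.
  split.
  - intros i Hi. unfold d0. destruct i; [lia|reflexivity].
  - induction n; [simpl; unfold d0; simpl; ring|]. rewrite tech5, IHn. unfold d0. simpl. ring.
Qed.

Lemma circ_sphere s : sphere 1 (circ_exp s).
Proof.
  split.
  - intros i Hi. unfold circ_exp. destruct i as [|[|i]]; try lia. reflexivity.
  - simpl. unfold circ_exp; simpl. pose proof (sin2_cos2 (2*PI*s)). unfold Rsqr in H. lra.
Qed.

Lemma circ_0 : circ_exp 0 = d0.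
Proof.
  apply functional_extensionality; intros i. unfold circ_exp, d0.
  destruct i as [|[|i]]; simpl; rewrite ?Rmult_0_r, ?cos_0, ?sin_0; reflexivity.
Qed.

Lemma circ_1 : circ_exp 1 = d0.
Proof.
  apply functional_extensionality; intros i. unfold circ_exp, d0.
  destruct i as [|[|i]]; simpl; rewrite ?Rmult_1_r, ?cos_2PI, ?sin_2PI; reflexivity.
Qed.

Lemma edist_lt k v w eps : 0 < eps -> sum_f_R0 (fun i => (v i - w i) ^ 2) k < eps ^ 2 ->
  edist k v w < eps.
Proof.
  intros He Hs. unfold edist. rewrite <- (sqrt_pow2 eps) by lra.
  apply sqrt_lt_1_alt. split; [|exact Hs].
  apply cond_pos_sum. intros; apply pow2_ge_0.
Qed.

Lemma sq_lt x c : Rabs x < c -> x ^ 2 < c ^ 2.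
Proof. intros H. rewrite <- pow2_abs. pose proof (Rabs_pos x). nra. Qed.

Lemma circ_cont a eps : 0 < eps -> exists delta, 0 < delta /\
  forall b, Rabs (a - b) < delta -> edist 1 (circ_exp a) (circ_exp b) < eps.
Proof.
  intros He.
  destruct (cont_eps cos continuity_cos (2*PI*a) (eps/2)) as [d1 [Hd1 H1]]; [lra|].
  destruct (cont_eps sin continuity_sin (2*PI*a) (eps/2)) as [d2 [Hd2 H2]]; [lra|].
  pose proof PI_RGT_0.
  exists (Rmin d1 d2 / (2*PI)). split.
  { apply Rdiv_lt_0_compat; [apply Rmin_pos; lra|lra]. }
  intros b Hb. apply edist_lt; [exact He|]. simpl. unfold circ_exp; simpl.
  assert (Hab : Rabs (2*PI*b - 2*PI*a) < Rmin d1 d2).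
  { replace (2*PI*b - 2*PI*a) with ((2*PI) * (b - a)) by ring.
    rewrite Rabs_mult, Rabs_right by lra.
    rewrite Rabs_minus_sym in Hb.
    apply (Rmult_lt_compat_l (2*PI)) in Hb; [|lra].
    replace (2 * PI * (Rmin d1 d2 / (2 * PI))) with (Rmin d1 d2) in Hb by (field; lra).
    exact Hb. }
  pose proof (Rmin_l d1 d2). pose proof (Rmin_r d1 d2).
  specialize (H1 (2*PI*b) ltac:(lra)). specialize (H2 (2*PI*b) ltac:(lra)).
  rewrite Rabs_minus_sym in H1, H2.
  assert (A1 : (cos (2*PI*a) - cos (2*PI*b))^2 < (eps/2)^2).
  { apply sq_lt; exact H1. }
  assert (A2 : (sin (2*PI*a) - sin (2*PI*b))^2 < (eps/2)^2).
  { apply sq_lt; exact H2. }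
  nra.
Qed.

Definition cont2 {X : MetSpace} (T : R -> R -> X) : Prop :=
  forall s u, unitI s -> unitI u -> forall eps, 0 < eps -> exists delta, 0 < delta /\
   forall s' u', unitI s' -> unitI u' -> Rabs (s - s') < delta -> Rabs (u - u') < delta ->
     mdist (T s u) (T s' u') < eps.

Definition ext {X : MetSpace} (r : (nat -> R) -> R -> (nat -> R) * R)
  (B : (nat -> R) -> R -> X) (T : R -> R -> X) (t : nat -> R) (s u : R) : X :=
  let p := r t u in if Req_EM_T (snd p) 0 then B (fst p) s else T s (snd p).

Lemma unit0 : unitI 0. Proof. unfold unitI; lra. Qed.
Lemma unit1 : unitI 1. Proof. unfold unitI; lra. Qed.

Lemma Rmax_lt_inv a b c : Rmax a b < c -> a < c /\ b < c.
Proof. intros H. split; eapply Rle_lt_trans; [apply Rmax_l| exact H | apply Rmax_r | exact H]. Qed.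

Lemma ext_cont {X : MetSpace} n r (B : (nat -> R) -> R -> X) T :
  is_retraction n r -> cont_cyl n B -> cont2 T -> (forall s, unitI s -> B d0 s = T s 0) ->
  forall t s u, sphere n t -> unitI s -> unitI u -> forall eps, 0 < eps ->
  exists delta, 0 < delta /\ forall w s' u', sphere n w -> unitI s' -> unitI u' ->
    edist n t w < delta -> Rabs (s - s') < delta -> Rabs (u - u') < delta ->
    mdist (ext r B T t s u) (ext r B T w s' u') < eps.
Proof.
  intros [HA [Hid Hc]] HB HT Hcomp t s u Ht Hs Hu eps He.
  unfold ext; cbv beta zeta.
  destruct (HA t u Ht Hu) as [Hp1 [Hp2 Hp3]].
  destruct (Req_EM_T (snd (r t u)) 0) as [E|E].
  - destruct (HB (fst (r t u)) s Hp1 Hs (eps/2)) as [dB [HdB HB']]; [lra|].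
    destruct (HT s 0 Hs unit0 (eps/2)) as [dT [HdT HT']]; [lra|].
    destruct (Hc t u Ht Hu (Rmin dB dT)) as [dr [Hdr Hr']]; [apply Rmin_pos; lra|].
    exists (Rmin dr (Rmin dB dT)). split; [apply Rmin_pos; [lra| apply Rmin_pos; lra]|].
    intros w s' u' Hw Hs' Hu' H1 H2 H3.
    pose proof (Rmin_l dr (Rmin dB dT)) as m1. pose proof (Rmin_r dr (Rmin dB dT)) as m2.
    pose proof (Rmin_l dB dT) as m3. pose proof (Rmin_r dB dT) as m4.
    specialize (Hr' w u' Hw Hu' ltac:(lra) ltac:(lra)).
    unfold cyl_dist in Hr'. apply Rmax_lt_inv in Hr'. destruct Hr' as [R1 R2].
    destruct (HA w u' Hw Hu') as [Hq1 [Hq2 Hq3]].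
    destruct (Req_EM_T (snd (r w u')) 0) as [E'|E'].
    + assert (mdist (B (fst (r t u)) s) (B (fst (r w u')) s') < eps/2) by (apply HB'; auto; lra). lra.
    + destruct Hq3 as [Hq3|Hq3]; [contradiction|].
      rewrite Hq3 in R1.
      assert (D1 : mdist (B (fst (r t u)) s) (B d0 s) < eps/2).
      { apply HB'; [apply d0_sphere|exact Hs|lra|rewrite Rminus_diag, Rabs_R0; lra]. }
      assert (D2 : mdist (T s 0) (T s' (snd (r w u'))) < eps/2).
      { apply HT'; [exact Hs'|exact Hq2|lra|rewrite <- E; lra]. }
      rewrite <- Hcomp in D2 by exact Hs.
      pose proof (mdist_tri _ (B (fst (r t u)) s) (B d0 s) (T s' (snd (r w u')))). lra.
  - destruct Hp3 as [Hp3|Hp3]; [contradiction|].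
    destruct (HT s (snd (r t u)) Hs Hp2 eps He) as [dT [HdT HT']].
    assert (Hpos : 0 < Rabs (snd (r t u))) by (apply Rabs_pos_lt; exact E).
    destruct (Hc t u Ht Hu (Rmin dT (Rabs (snd (r t u))))) as [dr [Hdr Hr']]; [apply Rmin_pos; lra|].
    exists (Rmin dr dT). split; [apply Rmin_pos; lra|].
    intros w s' u' Hw Hs' Hu' H1 H2 H3.
    pose proof (Rmin_l dr dT) as m1. pose proof (Rmin_r dr dT) as m2.
    pose proof (Rmin_l dT (Rabs (snd (r t u)))) as m3. pose proof (Rmin_r dT (Rabs (snd (r t u)))) as m4.
    specialize (Hr' w u' Hw Hu' ltac:(lra) ltac:(lra)).
    unfold cyl_dist in Hr'. apply Rmax_lt_inv in Hr'. destruct Hr' as [R1 R2].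
    destruct (HA w u' Hw Hu') as [Hq1 [Hq2 Hq3]].
    destruct (Req_EM_T (snd (r w u')) 0) as [E'|E'].
    + rewrite E', Rminus_0_r in R2. lra.
    + apply HT'; auto; lra.
Qed.

Definition contR2 (phi : R -> R -> R) : Prop :=
  forall s u, unitI s -> unitI u -> forall eps, 0 < eps -> exists delta, 0 < delta /\
   forall s' u', unitI s' -> unitI u' -> Rabs (s - s') < delta -> Rabs (u - u') < delta ->
     Rabs (phi s u - phi s' u') < eps.

Lemma cont2_H {X : MetSpace} (H : (nat -> R) -> R -> X) phi :
  cont_cyl 1 H -> contR2 phi -> cont2 (fun s u => H (circ_exp (phi s u)) s).
Proof.
  intros HH Hphi s u Hs Hu eps He.
  destruct (HH (circ_exp (phi s u)) s (circ_sphere _) Hs eps He) as [dH [HdH HH']].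
  destruct (circ_cont (phi s u) dH HdH) as [de [Hde He']].
  destruct (Hphi s u Hs Hu de Hde) as [dp [Hdp Hp]].
  exists (Rmin dH dp). split; [apply Rmin_pos; lra|].
  intros s' u' Hs' Hu' H1 H2.
  pose proof (Rmin_l dH dp). pose proof (Rmin_r dH dp).
  apply HH'; [apply circ_sphere|exact Hs'| |lra].
  apply He'. apply Hp; auto; lra.
Qed.

Lemma cont2_g {X : MetSpace} (g : (nat -> R) -> X) phi :
  cont_sphere 1 g -> contR2 phi -> cont2 (fun s u => g (circ_exp (phi s u))).
Proof.
  intros Hg Hphi. apply (cont2_H (fun v _ => g v) phi); [|exact Hphi].
  intros v s Hv Hs eps He. destruct (Hg v Hv eps He) as [d [Hd H]].
  exists d; split; [exact Hd|]. intros; apply H; auto.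
Qed.

Lemma cont2_const {X : MetSpace} (x : X) : cont2 (fun _ _ => x).
Proof.
  intros s u _ _ eps He. exists 1; split; [lra|]. intros.
  rewrite (proj2 (mdist_eq0 _ x x) eq_refl). exact He.
Qed.

Lemma contR2_1mu : contR2 (fun _ u => 1 - u).
Proof.
  intros s u _ _ eps He. exists eps; split; [exact He|]. intros s' u' _ _ _ H.
  replace (1 - u - (1 - u')) with (- (u - u')) by ring. rewrite Rabs_Ropp. exact H.
Qed.

Lemma contR2_u : contR2 (fun _ u => u).
Proof.
  intros s u _ _ eps He. exists eps; split; [exact He|]. intros s' u' _ _ _ H. exact H.
Qed.

Lemma contR2_W : contR2 (fun s u => 1 - s + s * u).
Proof.
  intros s u Hs Hu eps He. exists (eps/3); split; [lra|]. intros s' u' Hs' Hu' H1 H2.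
  unfold unitI in *.
  replace (1 - s + s * u - (1 - s' + s' * u')) with ((s' - s) * (1 - u') + s * (u - u')) by ring.
  eapply Rle_lt_trans; [apply Rabs_triang|]. rewrite !Rabs_mult.
  rewrite (Rabs_right (1 - u')) by lra. rewrite (Rabs_right s) by lra.
  rewrite Rabs_minus_sym in H1.
  pose proof (Rabs_pos (s' - s)). pose proof (Rabs_pos (u - u')). nra.
Qed.

Lemma cont_cyl_const {X : MetSpace} n (a : (nat -> R) -> X) :
  cont_sphere n a -> cont_cyl n (fun v _ => a v).
Proof.
  intros Ha v s Hv Hs eps He. destruct (Ha v Hv eps He) as [d [Hd H]].
  exists d; split; [exact Hd|]. intros; apply H; auto.
Qed.

Lemma r_id n r t u : is_retraction n r -> in_A n (t, u) -> r t u = (t, u).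
Proof. intros [_ [Hid _]] HA. exact (Hid (t, u) HA). Qed.

Lemma inA_bot n t : sphere n t -> in_A n (t, 0).
Proof. intros Ht. split; [exact Ht|split; [exact unit0|left; reflexivity]]. Qed.

Lemma inA_d0 n u : unitI u -> in_A n (d0, u).
Proof. intros Hu. split; [apply d0_sphere|split; [exact Hu|right; reflexivity]]. Qed.

Lemma ext_bot {X : MetSpace} n r (B : (nat -> R) -> R -> X) T t s :
  is_retraction n r -> sphere n t -> ext r B T t s 0 = B t s.
Proof.
  intros Hr Ht. unfold ext; cbv beta zeta. rewrite (r_id n r t 0 Hr (inA_bot n t Ht)). simpl.
  destruct (Req_EM_T 0 0); [reflexivity|contradiction].
Qed.

Lemma ext_d0 {X : MetSpace} n r (B : (nat -> R) -> R -> X) T s u :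
  is_retraction n r -> unitI u -> u <> 0 -> ext r B T d0 s u = T s u.
Proof.
  intros Hr Hu Hne. unfold ext; cbv beta zeta. rewrite (r_id n r d0 u Hr (inA_d0 n u Hu)). simpl.
  destruct (Req_EM_T u 0); [contradiction|reflexivity].
Qed.

Lemma ext_d0_0 {X : MetSpace} n r (B : (nat -> R) -> R -> X) T s :
  is_retraction n r -> ext r B T d0 s 0 = B d0 s.
Proof. intros Hr. apply (ext_bot n); [exact Hr|apply d0_sphere]. Qed.

Lemma cont_cyl_ext_s {X : MetSpace} n r (B : (nat -> R) -> R -> X) T u0 :
  is_retraction n r -> cont_cyl n B -> cont2 T -> (forall s, unitI s -> B d0 s = T s 0) ->
  unitI u0 -> cont_cyl n (fun t s => ext r B T t s u0).
Proof.
  intros Hr HB HT Hc Hu0 v s Hv Hs eps He.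
  destruct (ext_cont n r B T Hr HB HT Hc v s u0 Hv Hs Hu0 eps He) as [d [Hd H]].
  exists d; split; [exact Hd|]. intros w t Hw Ht H1 H2. apply H; auto.
  rewrite Rminus_diag, Rabs_R0; exact Hd.
Qed.

Lemma cont_cyl_ext_u {X : MetSpace} n r (B : (nat -> R) -> R -> X) T s0 :
  is_retraction n r -> cont_cyl n B -> cont2 T -> (forall s, unitI s -> B d0 s = T s 0) ->
  unitI s0 -> cont_cyl n (fun t u => ext r B T t s0 u).
Proof.
  intros Hr HB HT Hc Hs0 v s Hv Hs eps He.
  destruct (ext_cont n r B T Hr HB HT Hc v s0 s Hv Hs0 Hs eps He) as [d [Hd H]].
  exists d; split; [exact Hd|]. intros w t Hw Ht H1 H2. apply H; auto.
  rewrite Rminus_diag, Rabs_R0; exact Hd.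
Qed.

Lemma cont_sphere_ext {X : MetSpace} n r (B : (nat -> R) -> R -> X) T s0 u0 :
  is_retraction n r -> cont_cyl n B -> cont2 T -> (forall s, unitI s -> B d0 s = T s 0) ->
  unitI s0 -> unitI u0 -> cont_sphere n (fun t => ext r B T t s0 u0).
Proof.
  intros Hr HB HT Hc Hs0 Hu0 v Hv eps He.
  destruct (ext_cont n r B T Hr HB HT Hc v s0 u0 Hv Hs0 Hu0 eps He) as [d [Hd H]].
  exists d; split; [exact Hd|]. intros w Hw H1. apply H; auto;
  rewrite Rminus_diag, Rabs_R0; exact Hd.
Qed.

Lemma htpy_eq {X : MetSpace} n (x0 : X) a b a' b' :
  based_htpy n x0 a b -> (forall v, sphere n v -> a' v = a v) -> (forall v, sphere n v -> b' v = b v) ->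
  based_htpy n x0 a' b'.
Proof.
  intros [H [Hc [He Hb]]] Ea Eb. exists H. split; [exact Hc|split; [|exact Hb]].
  intros v Hv. rewrite Ea, Eb by exact Hv. apply He; exact Hv.
Qed.

Lemma htpy_trans {X : MetSpace} n (x0 : X) a b c :
  based_htpy n x0 a b -> based_htpy n x0 b c -> based_htpy n x0 a c.
Proof.
  intros [H1 [Hc1 [He1 Hb1]]] [H2 [Hc2 [He2 Hb2]]].
  exists (fun v s => if Rle_dec s (1/2) then H1 v (2*s) else H2 v (2*s-1)).
  split; [|split].
  - intros v s Hv Hs eps He. unfold unitI in Hs.
    destruct (Rlt_or_le s (1/2)) as [Hlt|Hge].
    + destruct (Hc1 v (2*s) Hv ltac:(unfold unitI; lra) eps He) as [d [Hd H]].
      exists (Rmin (d/2) (1/2 - s)). split; [apply Rmin_pos; lra|].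
      intros w t Hw Ht D1 D2. pose proof (Rmin_l (d/2) (1/2 - s)). pose proof (Rmin_r (d/2) (1/2-s)).
      unfold unitI in Ht.
      assert (t < 1/2) by (apply Rabs_def2 in D2; lra).
      destruct (Rle_dec s (1/2)); [|lra]. destruct (Rle_dec t (1/2)); [|lra].
      apply H; auto; [unfold unitI; lra|lra|].
      replace (2*s - 2*t) with (2*(s-t)) by ring. rewrite Rabs_mult, Rabs_right by lra. lra.
    + destruct (Rle_lt_or_eq_dec _ _ Hge) as [Hgt|Heq].
      * destruct (Hc2 v (2*s-1) Hv ltac:(unfold unitI; lra) eps He) as [d [Hd H]].
        exists (Rmin (d/2) (s - 1/2)). split; [apply Rmin_pos; lra|].
        intros w t Hw Ht D1 D2. pose proof (Rmin_l (d/2) (s - 1/2)). pose proof (Rmin_r (d/2) (s-1/2)).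
        unfold unitI in Ht.
        assert (t > 1/2) by (apply Rabs_def2 in D2; lra).
        destruct (Rle_dec s (1/2)); [lra|]. destruct (Rle_dec t (1/2)); [lra|].
        apply H; auto; [unfold unitI; lra|lra|].
        replace (2*s - 1 - (2*t - 1)) with (2*(s-t)) by ring. rewrite Rabs_mult, Rabs_right by lra. lra.
      * subst s.
        destruct (Hc1 v 1 Hv unit1 eps He) as [d1 [Hd1 G1]].
        destruct (Hc2 v 0 Hv unit0 eps He) as [d2 [Hd2 G2]].
        exists (Rmin d1 d2 / 2). split; [pose proof (Rmin_pos d1 d2 Hd1 Hd2); lra|].
        intros w t Hw Ht D1 D2. pose proof (Rmin_l d1 d2). pose proof (Rmin_r d1 d2).
        unfold unitI in Ht.
        destruct (Rle_dec (1/2) (1/2)); [|lra].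
        replace (2 * (1/2)) with 1 by field.
        destruct (Rle_dec t (1/2)).
        -- apply G1; auto; [unfold unitI; lra|lra|].
           apply Rabs_def2 in D2. apply Rabs_def1; lra.
        -- rewrite (proj2 (He1 v Hv)), <- (proj1 (He2 v Hv)).
           apply G2; auto; [unfold unitI; lra|lra|].
           apply Rabs_def2 in D2. apply Rabs_def1; lra.
  - intros v Hv. split.
    + destruct (Rle_dec 0 (1/2)); [|lra]. rewrite Rmult_0_r. apply He1; exact Hv.
    + destruct (Rle_dec 1 (1/2)); [lra|]. replace (2*1-1) with 1 by ring. apply He2; exact Hv.
  - intros s Hs. unfold unitI in Hs. destruct (Rle_dec s (1/2)).
    + apply Hb1. unfold unitI; lra.
    + apply Hb2. unfold unitI; lra.
Qed.

Fixpoint toF (m : nat) : Tn m R -> nat -> R :=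
  match m return Tn m R -> nat -> R with
  | O => fun _ _ => 0
  | S m' => fun x i => match i with O => fst x | S j => toF m' (snd x) j end
  end.

Fixpoint ofF (m : nat) (v : nat -> R) : Tn m R :=
  match m return Tn m R with
  | O => tt
  | S m' => (v O, ofF m' (fun j => v (S j)))
  end.

Lemma toF_ofF m : forall v i, (i < m)%nat -> toF m (ofF m v) i = v i.
Proof.
  induction m; intros v i Hi; [lia|]. destruct i; simpl; [reflexivity|].
  rewrite IHm by lia. reflexivity.
Qed.

Lemma toF_out m : forall x i, (m <= i)%nat -> toF m x i = 0.
Proof.
  induction m; intros x i Hi; [reflexivity|]. destruct i; [lia|]. simpl. apply IHm; lia.
Qed.

Lemma close_coord m : forall d x t, close_n m d x t -> forall i, (i < m)%nat ->
  Rabs (toF m x i - toF m t i) < d.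
Proof.
  induction m; intros d x t H i Hi; [lia|].
  destruct x as [x1 x2], t as [t1 t2]. simpl in H. destruct H as [H1 H2].
  destruct i; simpl; [exact H1|]. apply IHm; [exact H2|lia].
Qed.

Lemma bounded_ofF m : forall v, (forall i, (i < m)%nat -> -1 <= v i <= 1) ->
  bounded_n m (ofF m (fun _ => -1)) (ofF m (fun _ => 1)) (ofF m v).
Proof.
  induction m; intros v H; simpl; [exact I|]. split.
  - apply H; lia.
  - apply IHm. intros i Hi. apply H; lia.
Qed.

Lemma sum_term_le (g : nat -> R) k i : (forall j, 0 <= g j) -> (i <= k)%nat -> g i <= sum_f_R0 g k.
Proof.
  intros Hg Hi. induction k.
  - assert (i = 0%nat) by lia. subst. simpl. lra.
  - destruct (Nat.eq_dec i (S k)) as [->|Hne].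
    + simpl. pose proof (cond_pos_sum g k Hg). lra.
    + simpl. pose proof (IHk ltac:(lia)). pose proof (Hg (S k)). lra.
Qed.

Lemma sum_le_const (g : nat -> R) k c : (forall i, (i <= k)%nat -> g i <= c) ->
  sum_f_R0 g k <= (INR k + 1) * c.
Proof.
  induction k; intros H.
  - simpl. specialize (H 0%nat ltac:(lia)). lra.
  - rewrite tech5, S_INR. specialize (IHk (fun i Hi => H i ltac:(lia))).
    specialize (H (S k) ltac:(lia)). lra.
Qed.

Lemma sq_diff_bound a b d : Rabs (a - b) <= d -> Rabs a <= 1 -> d <= 1 ->
  Rabs (a ^ 2 - b ^ 2) <= 3 * d.
Proof.
  intros H1 H2 H3. apply Rabs_le_between in H1. apply Rabs_le_between in H2.
  apply Rabs_le. destruct H1, H2. split; nra.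
Qed.

Lemma sum_sq_diff (a b : nat -> R) k d : (forall i, (i <= k)%nat -> Rabs (a i - b i) <= d /\ Rabs (a i) <= 1) ->
  d <= 1 ->
  Rabs (sum_f_R0 (fun i => a i ^ 2) k - sum_f_R0 (fun i => b i ^ 2) k) <= (INR k + 1) * (3 * d).
Proof.
  intros H Hd. induction k.
  - simpl sum_f_R0. specialize (H 0%nat ltac:(lia)). destruct H.
    replace ((INR 0 + 1) * (3*d)) with (3*d) by (simpl; ring). apply sq_diff_bound; auto.
  - rewrite !tech5, S_INR.
    specialize (IHk (fun i Hi => H i ltac:(lia))).
    destruct (H (S k) ltac:(lia)) as [A1 A2].
    pose proof (sq_diff_bound _ _ _ A1 A2 Hd).
    replace (sum_f_R0 (fun i : nat => a i ^ 2) k + a (S k) ^ 2 -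
      (sum_f_R0 (fun i : nat => b i ^ 2) k + b (S k) ^ 2)) with
      ((sum_f_R0 (fun i : nat => a i ^ 2) k - sum_f_R0 (fun i : nat => b i ^ 2) k) + (a (S k) ^ 2 - b (S k) ^ 2)) by ring.
    eapply Rle_trans; [apply Rabs_triang|]. lra.
Qed.

Lemma sphere_coord k v i : sphere k v -> Rabs (v i) <= 1.
Proof.
  intros [He Hs]. destruct (Compare_dec.le_lt_dec i k) as [Hi|Hi].
  - pose proof (sum_term_le (fun j => v j ^ 2) k i (fun j => pow2_ge_0 _) Hi) as H.
    cbv beta in H. rewrite Hs in H. rewrite <- (Rabs_pos_eq 1) by lra. apply Rsqr_le_abs_0. unfold Rsqr. lra.
  - rewrite He by lia. rewrite Rabs_R0; lra.
Qed.

Lemma sphere_bounded k (f : (nat -> R) -> R) :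
  (forall v, sphere k v -> exists delta, 0 < delta /\
     forall w, sphere k w -> edist k v w < delta -> f w <= f v + 1) ->
  exists M, forall v, sphere k v -> f v <= M.
Proof.
  intros Hloc.
  set (m := S k).
  set (K := INR k + 1).
  assert (HK : 1 <= K) by (unfold K; pose proof (pos_INR k); lra).
  set (P := fun (t : Tn m R) (d : R) => 0 < d /\ forall w, sphere k w -> close_n m d (ofF m w) t ->
              sphere k (toF m t) /\ f w <= f (toF m t) + 1).
  assert (Hex : forall t, exists d, P t d).
  { intros t. destruct (classic (sphere k (toF m t))) as [Hs|Hs].
    - destruct (Hloc _ Hs) as [dl [Hdl Hl]].
      exists (dl / (2 * K)). split; [apply Rdiv_lt_0_compat; lra|].
      intros w Hw Hc. split; [exact Hs|]. apply Hl; [exact Hw|].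
      apply edist_lt; [exact Hdl|].
      eapply Rle_lt_trans.
      { apply (sum_le_const _ k ((dl / (2*K))^2)). intros i Hi.
        pose proof (close_coord m _ _ _ Hc i ltac:(unfold m; lia)) as Hci.
        rewrite toF_ofF in Hci by (unfold m; lia). rewrite Rabs_minus_sym in Hci.
        left. apply sq_lt. exact Hci. }
      fold K. set (d := dl / (2*K)). assert (Hd : dl = d * (2 * K)) by (unfold d; field; lra).
      assert (0 < d) by (unfold d; apply Rdiv_lt_0_compat; lra).
      rewrite Hd. nra.
    - set (St := sum_f_R0 (fun i => toF m t i ^ 2) k).
      assert (HSt : St <> 1).
      { intros E. apply Hs. split; [intros i Hi; apply toF_out; unfold m; lia|exact E]. }
      set (c := Rabs (St - 1)).
      assert (Hc : 0 < c) by (apply Rabs_pos_lt; lra).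
      exists (Rmin 1 (c / (4 * K))). split; [apply Rmin_pos; [lra|apply Rdiv_lt_0_compat; lra]|].
      intros w Hw Hcl. exfalso.
      pose proof (Rmin_l 1 (c / (4 * K))). pose proof (Rmin_r 1 (c / (4 * K))).
      assert (B := sum_sq_diff w (toF m t) k (Rmin 1 (c / (4 * K)))).
      assert (B' : Rabs (sum_f_R0 (fun i => w i ^ 2) k - St) <= K * (3 * Rmin 1 (c / (4 * K)))).
      { apply B; [|exact H].
        intros i Hi. split; [|apply (sphere_coord k); exact Hw].
        pose proof (close_coord m _ _ _ Hcl i ltac:(unfold m; lia)) as Hci.
        rewrite toF_ofF in Hci by (unfold m; lia). lra. }
      rewrite (proj2 Hw) in B'. rewrite Rabs_minus_sym in B'. fold c in B'.
      assert (K * (3 * (c / (4 * K))) = 3 * c / 4) by (field; lra).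
      assert (K * (3 * Rmin 1 (c / (4 * K))) <= K * (3 * (c / (4 * K)))) by (apply Rmult_le_compat_l; lra).
      lra. }
  assert (Hdelta : exists delta : Tn m R -> posreal, forall t, P t (pos (delta t))).
  { exists (fun t => mkposreal (proj1_sig (constructive_indefinite_description _ (Hex t)))
                      (proj1 (proj2_sig (constructive_indefinite_description _ (Hex t))))).
    intros t. simpl. exact (proj2_sig (constructive_indefinite_description _ (Hex t))). }
  destruct Hdelta as [delta Hdelta].
  apply NNPP. intros Hn.
  apply (compactness_list m (ofF m (fun _ => -1)) (ofF m (fun _ => 1)) delta).
  intros [l Hl]. apply Hn.
  exists (fold_right (fun t acc => Rmax (f (toF m t) + 1) acc) 0 l).
  intros v Hv.
  destruct (Hl (ofF m v)) as [t [Hin [_ Hct]]].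
  { apply bounded_ofF. intros i Hi. pose proof (sphere_coord k v i Hv). apply Rabs_le_between in H. exact H. }
  destruct (Hdelta t) as [_ Ht]. destruct (Ht v Hv Hct) as [_ Hfv].
  eapply Rle_trans; [exact Hfv|]. clear -Hin.
  induction l as [|t' l IH]; [destruct Hin|].
  simpl. destruct Hin as [->|Hin]; [apply Rmax_l|].
  eapply Rle_trans; [apply IH; exact Hin|apply Rmax_r].
Qed.

Lemma loop_bounded {X : MetSpace} k (a b : (nat -> R) -> X) :
  cont_sphere k a -> cont_sphere k b -> exists M, forall v, sphere k v -> mdist (a v) (b v) <= M.
Proof.
  intros Ha Hb. apply sphere_bounded. intros v Hv.
  destruct (Ha v Hv (1/2) ltac:(lra)) as [da [Hda HA]].
  destruct (Hb v Hv (1/2) ltac:(lra)) as [db [Hdb HB]].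
  exists (Rmin da db). split; [apply Rmin_pos; lra|]. intros w Hw Hd.
  pose proof (Rmin_l da db). pose proof (Rmin_r da db).
  specialize (HA w Hw ltac:(lra)). specialize (HB w Hw ltac:(lra)).
  pose proof (mdist_tri _ (a w) (a v) (b w)). pose proof (mdist_tri _ (a v) (b v) (b w)).
  rewrite (mdist_sym _ (a w) (a v)) in H1. lra.
Qed.

Lemma mu_le {X : MetSpace} k (a b : (nat -> R) -> X) M :
  (forall v, sphere k v -> mdist (a v) (b v) <= M) -> mu k a b <= M.
Proof.
  intros H. unfold mu.
  destruct (Lub_Rbar_correct (fun r => exists v, sphere k v /\ r = mdist (a v) (b v))) as [Hub Hlub].
  assert (U : Rbar_le (Lub_Rbar (fun r => exists v, sphere k v /\ r = mdist (a v) (b v))) M).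
  { apply Hlub. intros x [v [Hv ->]]. simpl. apply H; exact Hv. }
  assert (L : Rbar_le (mdist (a d0) (b d0)) (Lub_Rbar (fun r => exists v, sphere k v /\ r = mdist (a v) (b v)))).
  { apply Hub. exists d0. split; [apply d0_sphere|reflexivity]. }
  destruct (Lub_Rbar _); simpl in *; [exact U|contradiction|contradiction].
Qed.

Lemma mu_ge {X : MetSpace} k (a b : (nat -> R) -> X) :
  (exists M, forall v, sphere k v -> mdist (a v) (b v) <= M) ->
  forall v, sphere k v -> mdist (a v) (b v) <= mu k a b.
Proof.
  intros [M HM] v Hv. unfold mu.
  destruct (Lub_Rbar_correct (fun r => exists v, sphere k v /\ r = mdist (a v) (b v))) as [Hub Hlub].
  assert (U : Rbar_le (Lub_Rbar (fun r => exists v, sphere k v /\ r = mdist (a v) (b v))) M).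
  { apply Hlub. intros x [w [Hw ->]]. simpl. apply HM; exact Hw. }
  assert (L : Rbar_le (mdist (a v) (b v)) (Lub_Rbar (fun r => exists v, sphere k v /\ r = mdist (a v) (b v)))).
  { apply Hub. exists v. split; [exact Hv|reflexivity]. }
  destruct (Lub_Rbar _); simpl in *; [exact L|contradiction|contradiction].
Qed.

Lemma mu_nonneg {X : MetSpace} k (a b : (nat -> R) -> X) : 0 <= mu k a b.
Proof.
  unfold mu.
  destruct (Lub_Rbar_correct (fun r => exists v, sphere k v /\ r = mdist (a v) (b v))) as [Hub Hlub].
  assert (L : Rbar_le (mdist (a d0) (b d0)) (Lub_Rbar (fun r => exists v, sphere k v /\ r = mdist (a v) (b v)))).
  { apply Hub. exists d0. split; [apply d0_sphere|reflexivity]. }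
  pose proof (mdist_ge0 _ (a d0) (b d0)).
  destruct (Lub_Rbar _); simpl in *; lra.
Qed.

Lemma glb_le (E : R -> Prop) x : (forall y, E y -> 0 <= y) -> E x -> real (Glb_Rbar E) <= x.
Proof.
  intros Hnn Hx. destruct (Glb_Rbar_correct E) as [Hlb Hglb].
  assert (A := Hlb x Hx).
  assert (B : Rbar_le 0 (Glb_Rbar E)) by (apply Hglb; intros y Hy; simpl; apply Hnn; exact Hy).
  destruct (Glb_Rbar E); simpl in *; [exact A|contradiction|contradiction].
Qed.

Lemma glb_ge (E : R -> Prop) x m : (forall y, E y -> 0 <= y) -> E x -> (forall y, E y -> m <= y) ->
  m <= real (Glb_Rbar E).
Proof.
  intros Hnn Hx Hm. destruct (Glb_Rbar_correct E) as [Hlb Hglb].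
  assert (A := Hlb x Hx).
  assert (B : Rbar_le m (Glb_Rbar E)) by (apply Hglb; intros y Hy; simpl; apply Hm; exact Hy).
  destruct (Glb_Rbar E); simpl in *; [exact B|contradiction|contradiction].
Qed.

Lemma glb_lt (E : R -> Prop) x d : (forall y, E y -> 0 <= y) -> E x -> real (Glb_Rbar E) < d ->
  exists y, E y /\ y < d.
Proof.
  intros Hnn Hx Hd. apply NNPP. intros Hn.
  assert (d <= real (Glb_Rbar E)).
  { apply (glb_ge E x); [exact Hnn|exact Hx|]. intros y Hy. apply Rnot_lt_le. intros Hlt. apply Hn. exists y; auto. }
  lra.
Qed.

Lemma htpy_refl {X : MetSpace} k (x0 : X) a : is_loop k x0 a -> based_htpy k x0 a a.
Proof.
  intros [Ha Ha0]. exists (fun v _ => a v). split; [apply cont_cyl_const; exact Ha|].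
  split; [intros; split; reflexivity|intros; exact Ha0].
Qed.

Definition rho_set {X : MetSpace} k (x0 : X) a b : R -> Prop :=
  fun r => exists a' b', is_loop k x0 a' /\ is_loop k x0 b' /\
     based_htpy k x0 a a' /\ based_htpy k x0 b b' /\ r = mu k a' b'.

Lemma rho_set_nn {X : MetSpace} k (x0 : X) a b : forall y, rho_set k x0 a b y -> 0 <= y.
Proof. intros y [a' [b' [_ [_ [_ [_ ->]]]]]]. apply mu_nonneg. Qed.

Lemma rho_set_self {X : MetSpace} k (x0 : X) a b : is_loop k x0 a -> is_loop k x0 b ->
  rho_set k x0 a b (mu k a b).
Proof.
  intros Ha Hb. exists a, b. split; [exact Ha|split; [exact Hb|split; [apply htpy_refl; exact Ha|split; [apply htpy_refl; exact Hb|reflexivity]]]].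
Qed.

Lemma rho_le {X : MetSpace} k (x0 : X) a b a' b' : is_loop k x0 a' -> is_loop k x0 b' ->
  based_htpy k x0 a a' -> based_htpy k x0 b b' -> rho k x0 a b <= mu k a' b'.
Proof.
  intros. apply (glb_le (rho_set k x0 a b)); [apply rho_set_nn|].
  exists a', b'. auto.
Qed.

Lemma rho_ge {X : MetSpace} k (x0 : X) a b m : is_loop k x0 a -> is_loop k x0 b ->
  (forall a' b', is_loop k x0 a' -> is_loop k x0 b' ->
     based_htpy k x0 a a' -> based_htpy k x0 b b' -> m <= mu k a' b') ->
  m <= rho k x0 a b.
Proof.
  intros Ha Hb H. apply (glb_ge (rho_set k x0 a b) (mu k a b)).
  - apply rho_set_nn.
  - apply rho_set_self; auto.
  - intros y [a' [b' [Ha' [Hb' [H1 [H2 ->]]]]]]. apply H; auto.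
Qed.

Lemma rho_lt {X : MetSpace} k (x0 : X) a b d : is_loop k x0 a -> is_loop k x0 b ->
  rho k x0 a b < d -> exists a' b', is_loop k x0 a' /\ is_loop k x0 b' /\
     based_htpy k x0 a a' /\ based_htpy k x0 b b' /\ mu k a' b' < d.
Proof.
  intros Ha Hb Hd.
  destruct (glb_lt (rho_set k x0 a b) (mu k a b) d (rho_set_nn k x0 a b) (rho_set_self k x0 a b Ha Hb) Hd)
    as [y [[a' [b' [Ha' [Hb' [H1 [H2 ->]]]]]] Hy]].
  exists a', b'. auto.
Qed.

Lemma ext_eq {X : MetSpace} n r (B B' : (nat -> R) -> R -> X) T T' t s s' u0 :
  is_retraction n r -> sphere n t -> unitI u0 ->
  (forall v, sphere n v -> B v s = B' v s') -> (forall u, unitI u -> u <> 0 -> T s u = T' s' u) ->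
  ext r B T t s u0 = ext r B' T' t s' u0.
Proof.
  intros [HA _] Ht Hu HB HT. unfold ext; cbv beta zeta.
  destruct (HA t u0 Ht Hu) as [H1 [H2 _]].
  destruct (Req_EM_T (snd (r t u0)) 0); auto.
Qed.

Lemma cont_path_g {X : MetSpace} (g : (nat -> R) -> X) (psi : R -> R) :
  cont_sphere 1 g -> (forall a b, Rabs (psi a - psi b) <= Rabs (a - b)) ->
  cont_path (fun s => g (circ_exp (psi s))).
Proof.
  intros Hg Hpsi s Hs eps He.
  destruct (Hg (circ_exp (psi s)) (circ_sphere _) eps He) as [d1 [Hd1 H1]].
  destruct (circ_cont (psi s) d1 Hd1) as [d2 [Hd2 H2]].
  exists d2. split; [exact Hd2|]. intros s' Hs' Hd.
  apply H1; [apply circ_sphere|]. apply H2. eapply Rle_lt_trans; [apply Hpsi|exact Hd].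
Qed.

Lemma cont2_path {X : MetSpace} (gamma : R -> X) : cont_path gamma -> cont2 (fun _ u => gamma (1 - u)).
Proof.
  intros Hg s u Hs Hu eps He. unfold unitI in Hu.
  destruct (Hg (1 - u) ltac:(unfold unitI; lra) eps He) as [d [Hd H]].
  exists d. split; [exact Hd|]. intros s' u' Hs' Hu' _ Hd'. unfold unitI in Hu'.
  apply H; [unfold unitI; lra|].
  replace (1 - u - (1 - u')) with (- (u - u')) by ring. rewrite Rabs_Ropp. exact Hd'.
Qed.

Lemma path_conj_ext {X : MetSpace} n r (gamma : R -> X) a t :
  path_conj n r gamma a t = ext r (fun v _ => a v) (fun _ u => gamma (1 - u)) t 0 1.
Proof. reflexivity. Qed.

Lemma path_conj_loop {X : MetSpace} n r (x0 : X) gamma a :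
  is_retraction n r -> cont_path gamma -> gamma 0 = x0 -> gamma 1 = x0 -> is_loop n x0 a ->
  is_loop n x0 (path_conj n r gamma a).
Proof.
  intros Hr Hg G0 G1 [Ha Ha0]. split.
  - apply (cont_sphere_ext n r (fun v _ => a v) (fun _ u => gamma (1 - u)) 0 1 Hr
      (cont_cyl_const n a Ha) (cont2_path gamma Hg)).
    + intros s _. rewrite Rminus_0_r, G1. exact Ha0.
    + exact unit0.
    + exact unit1.
  - change (ext r (fun v _ => a v) (fun _ u => gamma (1 - u)) d0 0 1 = x0).
    rewrite (ext_d0 n) by (auto; try exact unit1; lra).
    rewrite Rminus_diag. exact G0.
Qed.

Lemma pi1_gamma_cont {X : MetSpace} (g : (nat -> R) -> X) : cont_sphere 1 g -> cont_path (fun s => g (circ_exp s)).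
Proof. intros Hg. apply (cont_path_g g (fun s => s)); [exact Hg|intros; lra]. Qed.

Lemma act_loop {X : MetSpace} n r (x0 : X) g a :
  is_retraction n r -> is_loop 1 x0 g -> is_loop n x0 a -> is_loop n x0 (pi1_act n r g a).
Proof.
  intros Hr [Hg Hg0] Ha. unfold pi1_act. apply path_conj_loop; auto.
  - apply pi1_gamma_cont; exact Hg.
  - rewrite circ_0; exact Hg0.
  - rewrite circ_1; exact Hg0.
Qed.

Lemma pi1_ext {X : MetSpace} n r (g : (nat -> R) -> X) a t :
  pi1_act n r g a t = ext r (fun v _ => a v) (fun _ u => g (circ_exp (1 - u))) t 0 1.
Proof. reflexivity. Qed.

Lemma act_htpy {X : MetSpace} n r (x0 : X) g g1 a a1 :
  is_retraction n r -> based_htpy 1 x0 g g1 -> based_htpy n x0 a a1 ->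
  based_htpy n x0 (pi1_act n r g a) (pi1_act n r g1 a1).
Proof.
  intros Hr [H [Hc [He Hb]]] [G [Gc [Ge Gb]]].
  assert (Tc : cont2 (fun s u => H (circ_exp (1 - u)) s)) by (apply cont2_H; [exact Hc|exact contR2_1mu]).
  assert (Comp : forall s, unitI s -> G d0 s = H (circ_exp (1 - 0)) s).
  { intros s Hs. rewrite Rminus_0_r, circ_1, Gb, Hb by exact Hs. reflexivity. }
  exists (fun t s => ext r G (fun s u => H (circ_exp (1 - u)) s) t s 1). split; [|split].
  - apply cont_cyl_ext_s; auto. exact unit1.
  - intros v Hv. rewrite !pi1_ext. split.
    + apply (ext_eq n); auto; [exact unit1| |].
      * intros w Hw. apply Ge; exact Hw.
      * intros u Hu _. apply He. apply circ_sphere.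
    + apply (ext_eq n); auto; [exact unit1| |].
      * intros w Hw. apply Ge; exact Hw.
      * intros u Hu _. apply He. apply circ_sphere.
  - intros s Hs. rewrite (ext_d0 n) by (auto; try exact unit1; lra).
    rewrite Rminus_diag, circ_0. apply Hb; exact Hs.
Qed.

Lemma pc_dist {X : MetSpace} n r (gamma : R -> X) a b t :
  is_retraction n r -> sphere n t -> (exists M, forall v, sphere n v -> mdist (a v) (b v) <= M) ->
  mdist (path_conj n r gamma a t) (path_conj n r gamma b t) <= mu n a b.
Proof.
  intros [HA _] Ht HM. unfold path_conj; cbv beta zeta.
  destruct (HA t 1 Ht unit1) as [H1 _].
  destruct (Req_EM_T (snd (r t 1)) 0).
  - apply (mu_ge n a b HM _ H1).
  - rewrite (proj2 (mdist_eq0 _ _ _) eq_refl). apply mu_nonneg.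
Qed.

Lemma act_dist2 {X : MetSpace} n r (g g' a a' : (nat -> R) -> X) t :
  is_retraction n r -> sphere n t ->
  (exists M, forall v, sphere n v -> mdist (a v) (a' v) <= M) ->
  (exists M, forall v, sphere 1 v -> mdist (g v) (g' v) <= M) ->
  mdist (pi1_act n r g a t) (pi1_act n r g' a' t) <= Rmax (mu n a a') (mu 1 g g').
Proof.
  intros [HA _] Ht HM HM'. unfold pi1_act, path_conj; cbv beta zeta.
  destruct (HA t 1 Ht unit1) as [H1 _].
  destruct (Req_EM_T (snd (r t 1)) 0).
  - eapply Rle_trans; [apply (mu_ge n a a' HM _ H1)|apply Rmax_l].
  - eapply Rle_trans; [apply (mu_ge 1 g g' HM' _ (circ_sphere _))|apply Rmax_r].
Qed.

Lemma back_htpy {X : MetSpace} n r (x0 : X) g a a' :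
  is_retraction n r -> is_loop 1 x0 g -> is_loop n x0 a -> is_loop n x0 a' ->
  based_htpy n x0 (pi1_act n r g a) a' ->
  based_htpy n x0 a (path_conj n r (fun s => g (circ_exp (1 - s))) a').
Proof.
  intros Hr [Hg Hg0] [Ha Ha0] Ha' [K [Kc [Ke Kb]]].
  assert (g1 : g (circ_exp 1) = x0) by (rewrite circ_1; exact Hg0).
  assert (g0 : g (circ_exp 0) = x0) by (rewrite circ_0; exact Hg0).
  set (B0 := fun (v : nat -> R) (_ : R) => a v).
  assert (B0c : cont_cyl n B0) by (apply cont_cyl_const; exact Ha).
  set (T0 := fun (_ u : R) => g (circ_exp (1 - u))).
  assert (T0c : cont2 T0) by (apply cont2_g; [exact Hg|exact contR2_1mu]).
  assert (C0 : forall s, unitI s -> B0 d0 s = T0 s 0).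
  { intros s _. unfold B0, T0. rewrite Rminus_0_r, g1. exact Ha0. }
  set (F := fun t s => ext r B0 T0 t 0 s).
  assert (Fc : cont_cyl n F) by (apply cont_cyl_ext_u; auto; exact unit0).
  set (TW := fun s u => g (circ_exp (1 - s + s * u))).
  assert (TWc : cont2 TW) by (apply cont2_g; [exact Hg|exact contR2_W]).
  assert (CW : forall s, unitI s -> F d0 s = TW s 0).
  { intros s Hs. unfold F, TW. destruct (Req_dec s 0) as [->|Hne].
    - rewrite (ext_d0_0 n) by exact Hr. unfold B0. rewrite Ha0.
      replace (1 - 0 + 0 * 0) with 1 by ring. rewrite g1. reflexivity.
    - rewrite (ext_d0 n) by auto. unfold T0. replace (1 - s + s * 0) with (1 - s) by ring. reflexivity. }
  set (TP := fun (_ u : R) => g (circ_exp u)).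
  assert (TPc : cont2 TP) by (apply cont2_g; [exact Hg|exact contR2_u]).
  assert (CP : forall s, unitI s -> K d0 s = TP s 0).
  { intros s Hs. unfold TP. rewrite Kb, g0 by exact Hs. reflexivity. }
  apply htpy_trans with (b := fun t => ext r (fun v _ => a v) (fun _ _ => x0) t 0 1).
  {
    exists (fun t u => ext r (fun v _ => a v) (fun _ _ => x0) t 0 u). split; [|split].
    - apply (cont_cyl_ext_u n r (fun v _ => a v) (fun _ _ => x0) 0 Hr B0c (cont2_const x0));
        [intros; exact Ha0|exact unit0].
    - intros v Hv. split; [|reflexivity]. apply (ext_bot n); auto.
    - intros s Hs. destruct (Req_dec s 0) as [->|Hne].
      + rewrite (ext_d0_0 n) by exact Hr. exact Ha0.
      + rewrite (ext_d0 n) by auto. reflexivity. }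
  apply htpy_trans with (b := fun t => ext r F TW t 1 1).
  {
    exists (fun t s => ext r F TW t s 1). split; [|split].
    - apply cont_cyl_ext_s; auto. exact unit1.
    - intros v Hv. split; [|reflexivity]. apply (ext_eq n); auto; [exact unit1| |].
      + intros w Hw. unfold F. rewrite (ext_bot n) by auto. reflexivity.
      + intros u _ _. unfold TW. replace (1 - 0 + 0 * u) with 1 by ring. exact g1.
    - intros s Hs. rewrite (ext_d0 n) by (auto; try exact unit1; lra). unfold TW.
      replace (1 - s + s * 1) with 1 by ring. exact g1. }
  {
    exists (fun t s => ext r K TP t s 1). split; [|split].
    - apply cont_cyl_ext_s; auto. exact unit1.
    - intros v Hv. split.
      + apply (ext_eq n); auto; [exact unit1| |].
        * intros w Hw. rewrite (proj1 (Ke w Hw)). reflexivity.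
        * intros u _ _. unfold TP, TW. replace (1 - 1 + 1 * u) with u by ring. reflexivity.
      + change (ext r K TP v 1 1 = ext r (fun v _ => a' v) (fun _ u => g (circ_exp (1 - (1 - u)))) v 0 1).
        apply (ext_eq n); auto; [exact unit1| |].
        * intros w Hw. apply Ke; exact Hw.
        * intros u _ _. unfold TP. replace (1 - (1 - u)) with u by ring. reflexivity.
    - intros s Hs. rewrite (ext_d0 n) by (auto; try exact unit1; lra). unfold TP. exact g1. }
Qed.

Theorem theorem4p12 (X : MetSpace) (x0 : X) (n : nat) (r : (nat -> R) -> R -> (nat -> R) * R) :
  (1 <= n)%nat -> path_connected X -> is_retraction n r ->
  (forall g alpha, is_loop 1 x0 g -> is_loop n x0 alpha ->
     forall eps, 0 < eps -> exists delta, 0 < delta /\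
       forall g' alpha', is_loop 1 x0 g' -> is_loop n x0 alpha' ->
         rho 1 x0 g g' < delta -> rho n x0 alpha alpha' < delta ->
         rho n x0 (pi1_act n r g alpha) (pi1_act n r g' alpha') < eps)
  /\
  (forall g alpha beta, is_loop 1 x0 g -> is_loop n x0 alpha -> is_loop n x0 beta ->
     rho n x0 (pi1_act n r g alpha) (pi1_act n r g beta) = rho n x0 alpha beta).
Proof.
  intros _ _ Hr. split.
  - intros g a Hg Ha eps He. exists eps. split; [exact He|].
    intros g' a' Hg' Ha' Hrg Hra.
    destruct (rho_lt 1 x0 g g' eps Hg Hg' Hrg) as [g1 [g1' [Hg1 [Hg1' [Hh1 [Hh1' Hmu1]]]]]].
    destruct (rho_lt n x0 a a' eps Ha Ha' Hra) as [a1 [a1' [Ha1 [Ha1' [Hk1 [Hk1' Hmu2]]]]]].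
    eapply Rle_lt_trans.
    { apply (rho_le n x0 _ _ (pi1_act n r g1 a1) (pi1_act n r g1' a1')).
      - apply act_loop; auto.
      - apply act_loop; auto.
      - apply act_htpy; auto.
      - apply act_htpy; auto. }
    eapply Rle_lt_trans.
    { apply mu_le. intros v Hv. apply (act_dist2 n r); auto.
      - apply loop_bounded; [apply Ha1|apply Ha1'].
      - apply loop_bounded; [apply Hg1|apply Hg1']. }
    apply Rmax_lub_lt; assumption.
  - intros g a b Hg Ha Hb. apply Rle_antisym.
    + apply rho_ge; auto. intros a' b' Ha' Hb' Hh Hh'.
      eapply Rle_trans.
      { apply (rho_le n x0 _ _ (pi1_act n r g a') (pi1_act n r g b')).
        - apply act_loop; auto.
        - apply act_loop; auto.
        - apply act_htpy; auto. apply htpy_refl; exact Hg.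
        - apply act_htpy; auto. apply htpy_refl; exact Hg. }
      apply mu_le. intros v Hv. unfold pi1_act. apply pc_dist; auto.
      apply loop_bounded; [apply Ha'|apply Hb'].
    + apply rho_ge; [apply act_loop; auto|apply act_loop; auto|].
      intros a' b' Ha' Hb' Hh Hh'.
      assert (Gc : cont_path (fun s => g (circ_exp (1 - s)))).
      { apply (cont_path_g g (fun s => 1 - s)); [apply Hg|]. intros x y.
        replace (1 - x - (1 - y)) with (- (x - y)) by ring. rewrite Rabs_Ropp. lra. }
      assert (G0 : g (circ_exp (1 - 0)) = x0) by (rewrite Rminus_0_r, circ_1; apply Hg).
      assert (G1 : g (circ_exp (1 - 1)) = x0) by (rewrite Rminus_diag, circ_0; apply Hg).
      eapply Rle_trans.
      { apply (rho_le n x0 _ _ (path_conj n r (fun s => g (circ_exp (1 - s))) a')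
                                (path_conj n r (fun s => g (circ_exp (1 - s))) b')).
        - apply path_conj_loop; auto.
        - apply path_conj_loop; auto.
        - apply (back_htpy n r x0 g a a'); auto.
        - apply (back_htpy n r x0 g b b'); auto. }
      apply mu_le. intros v Hv. apply pc_dist; auto.
      apply loop_bounded; [apply Ha'|apply Hb'].
Qed.
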